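(* Let $X$ be a paracompact $\sigma$-space and let $(\lambda_i)_{i\ge1}$ be a sequence of open locally finite covers of $X$ with $\lambda_{i+1}\succ\lambda_i$ for all $i$. Then there exist a sequence $(\omega_i^\circ)_{i\ge1}$ of open locally finite covers of $X$ with $\omega_i^\circ\succ\lambda_i$ and $\omega^\circ_{i+1}\succ\omega^\circ_i$ for all $i$, a metric space $Z$, and a continuous bijection $\psi\colon X\to Z$ such that $\psi(\omega_i^\circ)=\{\psi(G):G\in\omega_i^\circ\}$ is an open locally finite cover of $Z$ for every $i$.
   Context: A $\sigma$-space is a regular $T_1$ space with a $\sigma$-discrete network (a network being a family $\mu$ such that for every $x$ and neighborhood $Ox$ there is $F\in\mu$ with $x\in F\subseteq Ox$). For covers $\omega,\lambda$, $\omega\succ\lambda$ means $\omega$ refines $\lambda$. *)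

(* Defs.v *)
From HB Require Import structures.
From mathcomp Require Import all_boot all_order all_algebra.
From mathcomp Require Import all_classical all_reals all_analysis.
From mathcomp Require Import Rstruct Rstruct_topology.

Set Implicit Arguments.
Unset Strict Implicit.
Unset Printing Implicit Defensive.

Local Open Scope classical_set_scope.

Section covers.
Context {T : topologicalType}.

Definition is_cover (F : set (set T)) : Prop := \bigcup_(G in F) G = setT.

Definition open_family (F : set (set T)) : Prop := forall G, F G -> open G.

Definition locally_finite_family (F : set (set T)) : Prop :=
  forall x : T, exists N, nbhs x N /\ finite_set [set G | F G /\ G `&` N !=set0].

Definition discrete_family (F : set (set T)) : Prop :=
  forall x : T, exists N, nbhs x N /\
    forall G1 G2, F G1 -> F G2 -> G1 `&` N !=set0 -> G2 `&` N !=set0 -> G1 = G2.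

Definition open_lf_cover (F : set (set T)) : Prop :=
  [/\ is_cover F, open_family F & locally_finite_family F].

Definition network (mu : set (set T)) : Prop :=
  forall (x : T) (U : set T), open U -> U x -> exists2 F, mu F & F x /\ F `<=` U.

Definition has_sigma_discrete_network : Prop :=
  exists mu : nat -> set (set T),
    (forall n, discrete_family (mu n)) /\ network (\bigcup_n mu n).

End covers.

(* omega \succ lambda : omega refines lambda *)
Definition refines {T : Type} (omega lambda : set (set T)) : Prop :=
  forall G, omega G -> exists2 L, lambda L & G `<=` L.

Definition sigma_space (T : topologicalType) : Prop :=
  [/\ regular_space T, accessible_space T & @has_sigma_discrete_network T].

Definition paracompact (T : topologicalType) : Prop :=
  forall lambda : set (set T), is_cover lambda -> open_family lambda ->
    exists2 omega : set (set T), open_lf_cover omega & refines omega lambda.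

(* Main.v *)
Require Import Defs.
From HB Require Import structures.
From mathcomp Require Import all_boot all_order all_algebra.
From mathcomp Require Import all_classical all_reals all_analysis.
From mathcomp Require Import Rstruct Rstruct_topology.
From mathcomp Require Import lra.

Set Implicit Arguments.
Unset Strict Implicit.
Unset Printing Implicit Defensive.
Import Order.TTheory GRing.Theory Num.Theory.
Local Open Scope classical_set_scope.

Section Basics.
Context {X : topologicalType}.
Implicit Types (S : set (set X)).

Lemma lf_sub S S' : S' `<=` S -> locally_finite_family S -> locally_finite_family S'.
Proof.
move=> sub lf x; have [N [Nx fin]] := lf x; exists N; split => //.
by apply: sub_finite_set fin => G [/sub SG GN].
Qed.

Lemma lf_img S (g : set X -> set X) : (forall A, S A -> g A `<=` A) ->
  locally_finite_family S -> locally_finite_family [set g A | A in S].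
Proof.
move=> gA lf x; have [N [Nx fin]] := lf x; exists N; split => //.
apply: (sub_finite_set _ (finite_image g fin)) => G [[A SA <-]] [y [gAy Ny]].
by exists A => //; split => //; exists y; split => //; apply: gA.
Qed.

Lemma lf_pointfin S x : locally_finite_family S -> finite_set [set A | S A /\ A x].
Proof.
move=> lf; have [N [Nx fin]] := lf x; apply: sub_finite_set fin => A [SA Ax].
by split => //; exists x; split => //; exact: nbhs_singleton.
Qed.

Lemma near_finite {T : choiceType} (x : X) (S : set T) (P : T -> X -> Prop) :
  finite_set S -> (forall A, S A -> \forall y \near x, P A y) ->
  \forall y \near x, forall A, S A -> P A y.
Proof.
move=> /finite_fsetP[D ->] h.
apply: filterS (@filter_bigI X T D P (nbhs x) _ _).
- by move=> y Hy A AD; exact: (Hy A AD).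
- by move=> i iD; apply: h.
Qed.

Lemma nclosure_near (B : set X) z : ~ closure B z -> \forall y \near z, ~ B y.
Proof.
move=> nz; have : nbhs z (~` closure B).
  by apply: open_nbhs_nbhs; split => //; apply: closed_openC; exact: closed_closure.
by apply: filterS => y nBy By; apply: nBy; exact: subset_closure.
Qed.

Lemma near_nclosure (B : set X) z : (\forall y \near z, ~ B y) -> ~ closure B z.
Proof. by move=> nz /(_ _ nz) [y [By nBy]]. Qed.

Lemma lf_closure S z : locally_finite_family S ->
  (forall B, S B -> ~ closure B z) -> ~ closure (\bigcup_(B in S) B) z.
Proof.
move=> lf hz; have [N [Nz fin]] := lf z.
have H : \forall y \near z, forall B, [set G | S G /\ G `&` N !=set0] B -> ~ B y.
  by apply: near_finite fin _ => B [SB _]; apply: nclosure_near; apply: hz.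
apply: near_nclosure.
near=> y.
case=> B SB By.
have Ny : N y by near: y.
have : forall B, [set G | S G /\ G `&` N !=set0] B -> ~ B y by near: y.
by move=> /(_ B); apply => //; split => //; exists y.
Unshelve. all: by end_near.
Qed.


Lemma shrink_cov (reg : regular_space X) (para : paracompact X) alpha :
  is_cover alpha -> open_family alpha ->
  exists2 beta : set (set X), open_lf_cover beta &
    forall B, beta B -> exists2 A, alpha A & closure B `<=` A.
Proof.
move=> cov op.
pose gam := [set V : set X | open V /\ exists2 A, alpha A & closure V `<=` A].
have [beta bc bref] : exists2 beta, open_lf_cover beta & refines beta gam.
  apply: para; last by move=> V [].
  rewrite /is_cover; apply/seteqP; split => // x _.
  have : (\bigcup_(G in alpha) G) x by rewrite cov.
  case=> A aA Ax.
  have nA : nbhs x A by apply: open_nbhs_nbhs; split => //; exact: op.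
  have [V Vx clV] := reg x A nA.
  exists V°; last exact: Vx.
  split; first exact: open_interior.
  exists A => //; apply: subset_trans clV; apply: closureS; exact: interior_subset.
exists beta => // B /bref [V [_ [A aA clV]] BV]; exists A => //.
exact: subset_trans (closureS BV) clV.
Qed.

Lemma para_normal (reg : regular_space X) (para : paracompact X) : normal_space X.
Proof.
apply/(@normal_openP Rdefinitions.R) => K E clK clE; rewrite setIC => EK0.
have [beta [bcov bop blf] bref] := @shrink_cov reg para ([set ~` E] `|` [set ~` K])
  ltac:(rewrite /is_cover; apply/seteqP; split => // x _;
        have [Ex|nEx] := pselect (E x);
        [exists (~` K); [by right| move=> Kx; by have : (E `&` K) x by [] ; rewrite EK0]
        | by exists (~` E); [left|]])
  ltac:(by move=> G [->|->]; apply: closed_openC).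
pose U := \bigcup_(B in [set B | beta B /\ B `&` K !=set0]) B.
have clU : forall e, E e -> ~ closure U e.
  move=> e Ee; apply: lf_closure; first by apply: lf_sub blf => B [].
  move=> B [bB [k [Bk Kk]]] clBe; have [A [->|->] clBA] := bref B bB.
    exact: clBA _ clBe Ee.
  exact: clBA k (subset_closure Bk) Kk.
exists U, (~` closure U); split.
- by apply: bigcup_open => B [bB _]; apply: bop.
- by apply: closed_openC; exact: closed_closure.
- move=> k Kk; have : (\bigcup_(G in beta) G) k by rewrite bcov.
  by case=> B bB Bk; exists B => //; split => //; exists k.
- by move=> e Ee; apply: clU.
- by apply/seteqP; split => // y [Uy]; apply; apply: subset_closure.
Qed.

Lemma closed_shrink (reg : regular_space X) (para : paracompact X) alpha :
  is_cover alpha -> open_family alpha ->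
  exists F : set X -> set X, (forall A, closed (F A) /\ F A `<=` A) /\
     forall x, exists2 A, alpha A & F A x.
Proof.
move=> cov op; have [beta [bcov bop blf] bref] := shrink_cov reg para cov op.
exists (fun A => closure (\bigcup_(B in [set B | beta B /\ closure B `<=` A]) B)).
split.
  move=> A; split; first exact: closed_closure.
  move=> z clz; apply: contrapT => nAz; move: clz; apply: lf_closure.
    by apply: lf_sub blf => B [].
  by move=> B [_ clBA] /clBA.
move=> x; have : (\bigcup_(G in beta) G) x by rewrite bcov.
case=> B bB Bx; have [A aA clBA] := bref B bB; exists A => //.
by apply: subset_closure; exists B.
Qed.

End Basics.

Local Open Scope ring_scope.
Notation R := Rdefinitions.R.

Definition supd {X I : Type} (S : set I) (g : I -> X -> X -> R) x y : R :=
  sup ([set g i x y | i in S] `|` [set 0]).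

Definition pmet {X : Type} (d : X -> X -> R) :=
  [/\ forall x, d x x = 0, forall x y, d x y = d y x,
      forall x y z, d x z <= d x y + d y z & forall x y, 0 <= d x y <= 1].

Section Supd.
Context {X I : Type} (S : set I) (g : I -> X -> X -> R).

Lemma supd_hasub (hb : forall i x y, S i -> g i x y <= 1) x y :
  has_ubound ([set g i x y | i in S] `|` [set 0]).
Proof. by exists 1 => r [[j Sj <-]|->]; [exact: hb|exact: ler01]. Qed.

Lemma supd_ge (hb : forall i x y, S i -> g i x y <= 1) i x y :
  S i -> g i x y <= supd S g x y.
Proof. by move=> Si; apply: (ub_le_sup (supd_hasub hb x y)); left; exists i. Qed.

Lemma supd_ge0 (hb : forall i x y, S i -> g i x y <= 1) x y : 0 <= supd S g x y.
Proof. by apply: (ub_le_sup (supd_hasub hb x y)); right. Qed.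

Lemma supd_le x y c : 0 <= c -> (forall i, S i -> g i x y <= c) -> supd S g x y <= c.
Proof.
move=> c0 h; apply: ge_sup; first by exists 0; right.
by move=> r [[j Sj <-]|->]; [exact: h|].
Qed.

Lemma supd_pmet : (forall i, S i -> pmet (g i)) -> pmet (supd S g).
Proof.
move=> hp.
have hb : forall i x y, S i -> g i x y <= 1.
  by move=> i x y /hp [_ _ _ /(_ x y) /andP[]].
have g0 : forall i x y, S i -> 0 <= g i x y.
  by move=> i x y /hp [_ _ _ /(_ x y) /andP[]].
split.
- move=> x; apply/eqP; rewrite eq_le supd_ge0 // andbT.
  by apply: supd_le => // i /hp [-> _ _ _].
- move=> x y; apply/eqP; rewrite eq_le; apply/andP; split.
    apply: supd_le; first exact: supd_ge0.
    by move=> i Si; have [_ -> _ _] := hp i Si; exact: supd_ge.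
  apply: supd_le; first exact: supd_ge0.
  by move=> i Si; have [_ -> _ _] := hp i Si; exact: supd_ge.
- move=> x y z; apply: supd_le; first by apply: addr_ge0; exact: supd_ge0.
  move=> i Si; have [_ _ tr _] := hp i Si.
  apply: le_trans (tr x y z) _; apply: lerD; exact: supd_ge.
- move=> x y; apply/andP; split; [exact: supd_ge0 | apply: supd_le => // i Si; exact: hb].
Qed.
End Supd.

Section Metrize.
Context {X : topologicalType}.

Definition cts_pm (d : X -> X -> R) := forall x e, 0 < e -> \forall y \near x, d x y < e.
Definition dopen (d : X -> X -> R) (G : set X) :=
  forall x, G x -> exists2 e, 0 < e & forall y, d x y < e -> G y.
Definition dlf (d : X -> X -> R) (om : set (set X)) := forall x,
  exists2 e, 0 < e & finite_set [set G | om G /\ exists y, G y /\ d x y < e].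

Lemma metrize_cover (reg : regular_space X) (para : paracompact X) W :
  open_lf_cover W -> exists om, exists d,
  [/\ open_lf_cover om, refines om W, pmet d, cts_pm d &
      (forall G, om G -> dopen d G) /\ dlf d om].
Proof.
move=> [cov op lf].
have [F [hF Fcov]] := closed_shrink reg para cov op.
have nX := para_normal reg para.
have hf : forall A, exists f : X -> R, W A -> [/\ continuous f,
    (forall x, 0 <= f x <= 1), (forall x, ~ A x -> f x = 0) &
    (forall x, F A x -> f x = 1)].
  move=> A; have [WA|nWA] := pselect (W A); last by exists (fun=> 0).
  have [clF FA] := hF A.
  have : uniform_separator (~` A) (F A).
    apply: (proj1 (@normal_separatorP R X) nX) => //.
      by apply: open_closedC; exact: op.
    by apply/seteqP; split => // y [nAy Fy]; exact: nAy (FA _ Fy).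
  move/(@uniform_separatorP X R) => [f [cf rf f0 f1]]; exists f => _; split => //.
  - move=> x; have : `[0, 1]%classic (f x) by apply: rf; exists x.
    by rewrite /= in_itv /=.
  - by move=> x nAx; apply: f0; exists x.
  - by move=> x Fx; apply: f1; exists x.
have [f hf'] := choice hf.
pose g A x y := `|f A x - f A y|.
pose U A := [set y | 2^-1 < f A y].
have UA : forall A, W A -> U A `<=` A.
  move=> A WA y; rewrite /U /= => lt; apply: contrapT => nAy.
  have [_ _ f0 _] := hf' A WA.
  by move: lt; rewrite f0 // ltNge invr_ge0 ler0n.
exists [set U A | A in W], (supd W g).
have gp : forall A, W A -> pmet (g A).
  move=> A WA; have [_ r01 _ _] := hf' A WA; rewrite /g; split.
  - by move=> x; rewrite subrr normr0.
  - by move=> x y; rewrite distrC.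
  - by move=> x y z; exact: ler_distD.
  - move=> x y; rewrite normr_ge0 /= ler_norml.
    have := r01 x; have := r01 y; move=> /andP[? ?] /andP[? ?].
    by apply/andP; split; lra.
have hb : forall A x y, W A -> g A x y <= 1.
  by move=> A x y /gp [_ _ _ /(_ x y) /andP[]].
split.
- split.
  + rewrite /is_cover; apply/seteqP; split => // x _.
    have [A WA FAx] := Fcov x; exists (U A); first by exists A.
    have [_ _ _ f1] := hf' A WA; rewrite /U /= f1 //; lra.
  + move=> G [A WA <-]; have [cf _ _ _] := hf' A WA.
    have -> : U A = f A @^-1` [set r | r > 2^-1] by [].
    by apply: open_comp; [move=> x _; apply: cf | exact: open_gt].
  + exact: lf_img UA lf.
- by move=> G [A WA <-]; exists A => //; exact: UA.
- exact: supd_pmet.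
- move=> x e e0; have [N [Nx fin]] := lf x.
  have H : \forall y \near x, forall A, [set G | W G /\ G `&` N !=set0] A ->
      g A x y < e / 2.
    apply: near_finite fin _ => A [WA _]; have [cf _ _ _] := hf' A WA.
    have e2 : 0 < e / 2 by rewrite divr_gt0.
    have nb : nbhs (f A x) [set r : R | `|f A x - r| < e / 2].
      by apply/nbhs_ballP; exists (e / 2).
    exact: (cf x _ nb).
  near=> y; apply: le_lt_trans (_ : e / 2 < e); last by lra.
  apply: supd_le; first by rewrite divr_ge0 // ltW.
  move=> A WA; have [AN|nAN] := pselect (A `&` N !=set0).
    apply: ltW.
    have : forall A, [set G | W G /\ G `&` N !=set0] A ->
      g A x y < e / 2 by near: y.
    by apply.
  have Ny : N y by near: y.
  have [_ _ f0 _] := hf' A WA.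
  rewrite /g !f0 ?subrr ?normr0 ?divr_ge0 ?ltW //.
    by move=> Ay; apply: nAN; exists y.
  by move=> Ax; apply: nAN; exists x; split => //; exact: nbhs_singleton.
- split.
  + move=> G [A WA <-] x Ux; exists (f A x - 2^-1); first by rewrite subr_gt0.
    move=> y dxy; have := supd_ge hb x y WA; rewrite /g => gle.
    have := le_lt_trans gle dxy; rewrite ltr_norml /U /= => /andP[_ ?]; lra.
  + move=> x; exists (4^-1); first by [].
    apply: (sub_finite_set _ (finite_image U (lf_pointfin x lf))).
    move=> G [[A WA <-]] [y [Uy dxy]]; exists A => //; split => //.
    have := supd_ge hb x y WA; rewrite /g => gle.
    have := le_lt_trans gle dxy; rewrite ltr_norml /U /= => /andP[h1 _].
    apply: contrapT => nAx; have [_ _ f0 _] := hf' A WA.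
    move: Uy; rewrite /U /= => Uy.
    rewrite f0 // in h1; lra.
Unshelve. all: by end_near.
Qed.
End Metrize.

Local Close Scope ring_scope.

Section Sep.
Context {X : topologicalType}.
Implicit Types (N : set (set X)).

Lemma discrete_lf N : discrete_family N -> locally_finite_family N.
Proof.
move=> d x; have [M [Mx hM]] := d x; exists M; split => //.
have [[G0 [NG0 G0M]]|nex] := pselect (exists G, N G /\ G `&` M !=set0).
  apply: sub_finite_set (finite_set1 G0) => G [NG GM] /=.
  exact: hM.
apply: sub_finite_set (finite_set0 _) => G hG; apply: nex; by exists G.
Qed.

Definition Bsep (N1 N2 : set (set X)) (F : set X) : set X :=
  ~` closure (\bigcup_(F' in [set F' | N1 F' /\ F' <> F]) F') `&`
  ~` closure (\bigcup_(F' in [set F' | N2 F' /\ closure F' `&` closure F = set0]) F').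

Definition sepcov (N1 N2 : set (set X)) : set (set X) :=
  [set ~` closure (\bigcup_(F in N1) F)] `|` [set Bsep N1 N2 F | F in N1].

Lemma sepcov_open (N1 N2 : set (set X)) : open_family (sepcov N1 N2).
Proof.
move=> G [->|[F _ <-]]; first by apply: closed_openC; exact: closed_closure.
by apply: openI; apply: closed_openC; exact: closed_closure.
Qed.

Lemma sepcov_cover (N1 N2 : set (set X)) : discrete_family N1 -> discrete_family N2 ->
  is_cover (sepcov N1 N2).
Proof.
move=> d1 d2; rewrite /is_cover; apply/seteqP; split => // z _.
have [clz|nclz] := pselect (closure (\bigcup_(F in N1) F) z); last first.
  by exists (~` closure (\bigcup_(F in N1) F)) => //; left.
have [F N1F clFz] : exists2 F, N1 F & closure F z.
  apply: contrapT => h; move: clz; apply: (lf_closure (discrete_lf d1)).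
  by move=> F N1F clFz; apply: h; exists F.
exists (Bsep N1 N2 F); first by right; exists F.
split.
- apply: lf_closure; first by apply: lf_sub (discrete_lf d1) => G [].
  move=> F' [N1F' neq] clF'z; apply: neq.
  have [M [Mz hM]] := d1 z.
  by apply: hM => //; [exact: clF'z | exact: clFz].
- apply: lf_closure; first by apply: lf_sub (discrete_lf d2) => G [].
  move=> F' [_ dis] clF'z.
  by have : (closure F' `&` closure F) z by []; rewrite dis.
Qed.

Lemma sepcov_sep (N1 N2 : set (set X)) F F' x y : N1 F -> F x -> N2 F' -> F' y ->
  closure F' `&` closure F = set0 ->
  forall M, sepcov N1 N2 M -> M x -> ~ M y.
Proof.
move=> N1F Fx N2F' F'y dis M [->|[F0 N1F0 <-]].
  by move=> nx; exfalso; apply: nx; apply: subset_closure; exists F.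
move=> [nx1 nx2] [_ ny2]; have [e|ne] := pselect (F0 = F).
  by subst F0; apply: ny2; apply: subset_closure; exists F'.
by apply: nx1; apply: subset_closure; exists F => //; split => // /esym.
Qed.

Lemma sigma_sep (reg : regular_space X) (acc : accessible_space X)
  (mu : nat -> set (set X)) : network (\bigcup_n mu n) ->
  forall x y, x <> y -> exists n m F F', [/\ mu n F, F x, mu m F', F' y &
     closure F' `&` closure F = set0].
Proof.
move=> net x y /eqP xy; have [A [oA xA yA]] := acc x y xy.
move: xA yA; rewrite !inE => xA yA.
have nA : nbhs x A by apply: open_nbhs_nbhs.
have [V Vx clV] := reg x A nA.
have nV : nbhs y (~` closure V).
  apply: open_nbhs_nbhs; split; first by apply: closed_openC; exact: closed_closure.
  by move=> /clV.
have [V' V'y clV'] := reg y _ nV.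
have [F [n _ muF] [Fx FV]] := net x _ (@open_interior _ V) Vx.
have [F' [m _ muF'] [F'y F'V]] := net y _ (@open_interior _ V') V'y.
exists n, m, F, F'; split => //.
apply/seteqP; split => // z [clF'z clFz].
have : closure V z by apply: (closureS (subset_trans FV (@interior_subset _ V))).
by apply: clV'; apply: (closureS (subset_trans F'V (@interior_subset _ V'))).
Qed.

End Sep.

Local Open Scope ring_scope.

Record mdata (X : choiceType) := MData {
  md : X -> X -> R;
  md0 : forall x, md x x = 0;
  mdpos : forall x y, md x y = 0 -> x = y;
  mdsym : forall x y, md x y = md y x;
  mdtri : forall y x z, md x z <= md x y + md y z }.

Definition MZ (X : choiceType) (m : mdata X) : Type := X.

Section MZinst.
Context (X : choiceType) (m : mdata X).
HB.instance Definition _ := Choice.on (MZ m).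
HB.instance Definition _ := @isMetric.Build R (MZ m) (md m) (@md0 _ m)
  (@mdpos _ m) (@mdsym _ m) (@mdtri _ m).

Lemma MZ_nbhsP (z : MZ m) (P : set (MZ m)) :
  nbhs z P <-> exists2 e, 0 < e & [set y | md m z y < e] `<=` P.
Proof.
rewrite nbhs_ballP; split => -[e e0 h]; exists e => //; move: h;
  by rewrite -ballEmdist.
Qed.
End MZinst.

Definition MZt (X : choiceType) (m : mdata X) : metricType R := Metric.clone R (MZ m) _.

Section Main.
Context (X : topologicalType) (lambda : nat -> set (set X)) (mu : nat -> set (set X)).

Definition prk (k : nat) : nat * nat := odflt (0%N, 0%N) (unpickle k).
Definition Tk k := sepcov (mu (prk k).1) (mu (prk k).2).

Definition Good k (prev : set (set X)) (p : set (set X) * (X -> X -> R)) :=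
  [/\ open_lf_cover p.1, refines p.1 (lambda k), refines p.1 prev,
      refines p.1 (Tk k) &
      [/\ pmet p.2, cts_pm p.2, (forall G, p.1 G -> dopen p.2 G) & dlf p.2 p.1]].

Definition pickG k prev : set (set X) * (X -> X -> R) :=
  match pselect (exists p, Good k prev p) with
  | left h => projT1 (cid h)
  | right _ => (set0, fun _ _ => 0)
  end.

Lemma pickG_spec k prev : (exists p, Good k prev p) -> Good k prev (pickG k prev).
Proof. by rewrite /pickG; case: pselect => // h _; exact: (projT2 (cid h)). Qed.

Fixpoint seqc k : set (set X) * (X -> X -> R) :=
  match k with
  | 0%N => pickG 0 [set setT]
  | k'.+1 => pickG k'.+1 (seqc k').1
  end.

Lemma step_ex (reg : regular_space X) (para : paracompact X)
  (disc : forall n, discrete_family (mu n))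
  (hl : forall i, open_lf_cover (lambda i)) k prev :
  is_cover prev -> open_family prev -> exists p, Good k prev p.
Proof.
move=> pc po.
pose M := [set G : set X | exists A B D,
  [/\ lambda k A, prev B, Tk k D & G = A `&` B `&` D]].
have [W Wc Wr] : exists2 W, open_lf_cover W & refines W M.
  apply: para.
    rewrite /is_cover; apply/seteqP; split => // x _.
    have [lc _ _] := hl k.
    have : (\bigcup_(G in lambda k) G) x by rewrite lc.
    case=> A lA Ax.
    have : (\bigcup_(G in prev) G) x by rewrite pc.
    case=> B pB Bx.
    have : (\bigcup_(G in Tk k) G) x by rewrite (sepcov_cover (disc _) (disc _)).
    case=> D tD Dx.
    by exists (A `&` B `&` D); [exists A, B, D | split; [split|]].
  move=> G [A [B [D [lA pB tD ->]]]].
  have [_ lo _] := hl k.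
  apply: openI; [apply: openI|]; [exact: lo lA|exact: po pB|exact: sepcov_open tD].
have [om [d [omc omr dp dc [dop dl]]]] := metrize_cover reg para Wc.
exists (om, d); split => //=.
- move=> G /omr [V /Wr [_ [A [B [D [lA _ _ ->]]]]] GV] q.
  by exists A => // y Gy; have [[? _] _] := GV y (q y Gy).
- move=> G /omr [V /Wr [_ [A [B [D [_ pB _ ->]]]]] GV] q.
  by exists B => // y Gy; have [[_ ?] _] := GV y (q y Gy).
- move=> G /omr [V /Wr [_ [A [B [D [_ _ tD ->]]]]] GV] q.
  by exists D => // y Gy; have [_ ?] := GV y (q y Gy).
Qed.

Lemma seqc_good (reg : regular_space X) (para : paracompact X)
  (disc : forall n, discrete_family (mu n))
  (hl : forall i, open_lf_cover (lambda i)) k :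
  Good k (if k is k'.+1 then (seqc k').1 else [set setT]) (seqc k).
Proof.
elim: k => [|k IH] /=.
  apply: pickG_spec; apply: step_ex => //.
    by rewrite /is_cover; apply/seteqP; split => // x _; exists setT.
  by move=> G ->; exact: openT.
have [[c o _] _ _ _ _] := IH.
by apply: pickG_spec; apply: step_ex.
Qed.

End Main.

Lemma pmet_scale {T : Type} (w : R) (r : T -> T -> R) : 0 <= w <= 1 -> pmet r ->
  pmet (fun x y => w * r x y).
Proof.
move=> /andP[w0 w1] [r0 rs rt rb]; split.
- by move=> x; rewrite r0 mulr0.
- by move=> x y; rewrite rs.
- by move=> x y z; rewrite -mulrDr; apply: ler_wpM2l => //.
- move=> x y; have /andP[h0 h1] := rb x y.
  by rewrite mulr_ge0 //= mulr_ile1.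
Qed.

Unset Implicit Arguments.
Theorem mainTheorem9 (X : topologicalType) (lambda : nat -> set (set X)) :
  sigma_space X -> paracompact X ->
  (forall i, open_lf_cover (lambda i)) ->
  (forall i, refines (lambda i.+1) (lambda i)) ->
  exists (omega : nat -> set (set X)) (Z : metricType Rdefinitions.R) (psi : X -> Z),
    [/\ (forall i, open_lf_cover (omega i)),
        (forall i, refines (omega i) (lambda i)),
        (forall i, refines (omega i.+1) (omega i)) &
        [/\ continuous psi, bijective psi &
           (forall i, open_lf_cover [set psi @` G | G in omega i])]].
Proof.
move=> [reg acc [mu [disc net]]] para hl _.
have gd := seqc_good reg para disc hl.
pose om i := (seqc lambda mu i).1.
pose rho i := (seqc lambda mu i).2.
pose w (k : nat) : R := (k.+1%:R)^-1.
have w01 : forall k, 0 <= w k <= 1.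
  by move=> k; rewrite /w invr_ge0 ler0n /= invf_le1 // ?ler1n // ltr0n.
have w0 : forall k, 0 < w k by move=> k; rewrite /w invr_gt0 ltr0n.
pose g k x y := w k * rho k x y.
have gp : forall k, pmet (g k).
  by move=> k; apply: pmet_scale => //; have [_ _ _ _ [? _ _ _]] := gd k.
have hb : forall k x y, [set: nat] k -> g k x y <= 1.
  by move=> k x y _; have [_ _ _ /(_ x y) /andP[]] := gp k.
pose d := supd [set: nat] g.
have dp : pmet d by apply: supd_pmet => k _.
have [d0 ds dt db] := dp.
have dpos : forall x y, d x y = 0 -> x = y.
  move=> x y dxy; apply: contrapT => xy.
  have [n [m [F [F' [muF Fx muF' F'y dis]]]]] := sigma_sep reg acc net xy.
  pose k := pickle (n, m).
  have prkE : prk k = (n, m) by rewrite /prk /k pickleK.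
  have [[c _ _] _ _ rT [_ _ dop _]] := gd k.
  have : (\bigcup_(G in om k) G) x by rewrite /om c.
  case=> G omG Gx; have [e e0 he] := dop G omG x Gx.
  have [D TD GD] := rT G omG.
  have nGy : ~ G y.
    move=> Gy; move: TD; rewrite /Tk prkE /= => TD.
    exact: (sepcov_sep muF Fx muF' F'y dis TD (GD x Gx) (GD y Gy)).
  have : e <= rho k x y by rewrite leNgt; apply/negP => /he.
  have : g k x y <= d x y by apply: supd_ge.
  rewrite dxy /g => h1 h2.
  have := w0 k; have : w k * e <= w k * rho k x y by rewrite ler_wpM2l // ltW.
  move=> h3 h4; have : 0 < w k * e by rewrite mulr_gt0.
  by rewrite ltNge (le_trans h3 h1).
pose mm := MData d0 dpos ds (fun y x z => dt x y z).
pose Z := MZt mm.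
pose psi : X -> Z := fun x => x.
have pE : forall G : set X, psi @` G = G.
  by move=> G; apply/seteqP; split => [y [z Gz <-]|y Gy] //; exists y.
have ball_rho : forall k x y e, d x y < w k * e -> rho k x y < e.
  move=> k x y e h; have : g k x y <= d x y by apply: supd_ge.
  rewrite /g => h1; have := le_lt_trans h1 h.
  by rewrite ltr_pM2l.
exists om, Z, psi; split.
- by move=> i; have [] := gd i.
- by move=> i; have [] := gd i.
- by move=> i; have [_ _ ] := gd i.+1.
split.
- move=> x P /= /(MZ_nbhsP (m:=mm)) [e e0 hP].
  have e2 : 0 < e / 2 by rewrite divr_gt0.
  have [K hK] := ltr_add_invr e2; rewrite add0r in hK.
  have H : \forall y \near x, forall k, `I_K k -> rho k x y < e / 2.
    apply: near_finite (finite_II K) _ => k _.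
    by have [_ _ _ _ [_ cts _ _]] := gd k; apply: cts.
  near=> y; apply: hP => /=.
  apply: le_lt_trans (_ : e / 2 < e); last by lra.
  apply: supd_le; first by rewrite ltW.
  move=> k _; rewrite /g; have [kK|Kk] := ltnP k K.
    have : forall k, `I_K k -> rho k x y < e / 2 by near: y.
    move=> /(_ k kK) hk; apply: ltW; apply: le_lt_trans hk.
    have [_ _ _ _ [[_ _ _ /(_ x y) /andP[r0 _]] _ _ _]] := gd k.
    by have /andP[_ w1] := w01 k; rewrite ler_piMl.
  have [_ _ _ _ [[_ _ _ /(_ x y) /andP[r0 r1]] _ _ _]] := gd k.
  apply: le_trans (ltW hK); apply: le_trans (_ : w k <= w K).
    by rewrite ler_piMr // ltW.
  by rewrite /w lef_pV2 ?posrE ?ltr0n // ler_nat.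
- by exists psi.
move=> i.
have -> : [set psi @` G | G in om i] = (om i : set (set Z)).
  apply/seteqP; split => [_ [G oG <-]|G oG]; first by rewrite pE.
  by exists G => //; rewrite pE.
have [[c o lf] _ _ _ [_ _ dop dl]] := gd i.
split.
- exact: c.
- move=> G oG; rewrite openE => x Gx; rewrite /interior /=.
  apply/(MZ_nbhsP (m:=mm)); have [e e0 he] := dop G oG x Gx.
  exists (w i * e); first by rewrite mulr_gt0.
  by move=> y /= /ball_rho; apply: he.
- move=> x; have [e e0 fin] := dl x.
  exists [set y : Z | d x y < w i * e]; split.
    by apply/(MZ_nbhsP (m:=mm)); exists (w i * e) => //; rewrite mulr_gt0.
  apply: sub_finite_set fin => G [oG [y [Gy Ny]]]; split => //.
  by exists y; split => //; apply: ball_rho.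
Unshelve. all: by end_near.
Qed.
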